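(* Let $B,C^T\in\mathbb{R}^{n\times m}$ and assume $\operatorname{rank}B=r$. (a) There exists an invertible $T\in\mathbb{R}^{n\times n}$ with $(TB)^T=CT^{-1}$ if and only if $\operatorname{Ker}C^T=\operatorname{Ker}B$, $\operatorname{rank}(CB)=r$ and $CB$ is symmetric positive semidefinite; equivalently, if and only if there exists an invertible (which can be taken orthogonal) $V\in\mathbb{R}^{m\times m}$ such that $BV=[B_1\;\;0]$, $C^TV=[C_1^T\;\;0]$ with $B_1,C_1^T\in\mathbb{R}^{n\times r}$ of full column rank and $C_1B_1=YY^T$ symmetric positive definite for some invertible $Y\in\mathbb{R}^{r\times r}$. (b) Let $N_B\in\mathbb{R}^{n\times(n-r)}$ have columns forming a basis of $\operatorname{Ker}B^T$. If the conditions in (a) hold, with $V,B_1,C_1,Y$ as there, then every invertible $T$ with $(TB)^T=CT^{-1}$ has the form $T=U T_Z T_0$, where $$T_0=\begin{bmatrix}N_B^T\\ Y^{-1}C_1\end{bmatrix},\qquad T_Z=\begin{bmatrix}Z&0\\0&I\end{bmatrix},$$ with $U\in\mathbb{R}^{n\times n}$ an arbitrary real orthogonal matrix and $Z\in\mathbb{R}^{(n-r)\times(n-r)}$ an arbitrary nonsingular matrix. *)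

(* Defs.v *)
(* real matrices over an abstract real closed field R
   (the paper works over the reals; every realType is an rcfType). *)
From HB Require Import structures.
From mathcomp Require Import all_boot all_order all_algebra.
Set Implicit Arguments. Unset Strict Implicit. Unset Printing Implicit Defensive.
Import Order.TTheory GRing.Theory Num.Theory.
Local Open Scope ring_scope.

Section Defs.
Variable R : rcfType.

Definition orthogonal_mx n (U : 'M[R]_n) : Prop := U *m U^T = 1%:M.

Definition symmetric_mx n (A : 'M[R]_n) : Prop := A^T = A.

Definition spsd_mx n (A : 'M[R]_n) : Prop :=
  symmetric_mx A /\ forall x : 'cV[R]_n, 0 <= (x^T *m A *m x) 0 0.

Definition spd_mx n (A : 'M[R]_n) : Prop :=
  symmetric_mx A /\ forall x : 'cV[R]_n, x != 0 -> 0 < (x^T *m A *m x) 0 0.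

Definition same_kernel p q m (A1 : 'M[R]_(p, m)) (A2 : 'M[R]_(q, m)) : Prop :=
  forall x : 'cV[R]_m, A1 *m x = 0 <-> A2 *m x = 0.

Definition cols_basis_of_ker p n k (N : 'M[R]_(n, k)) (A : 'M[R]_(p, n)) : Prop :=
  \rank N = k /\
  forall x : 'cV[R]_n, A *m x = 0 <-> exists y : 'cV[R]_k, x = N *m y.

End Defs.

(* Main.v *)
Require Import Defs.
From HB Require Import structures.
From mathcomp Require Import all_boot all_order all_algebra.
From mathcomp Require Import zify ring lra.
Import Order.TTheory GRing.Theory Num.Theory.
Local Open Scope ring_scope.

Module Helpers.
Set Implicit Arguments. Unset Strict Implicit. Unset Printing Implicit Defensive.


Lemma mx_eq0_cV (R : rcfType) p q (M : 'M[R]_(p, q)) :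
  (forall y : 'cV_q, M *m y = 0) -> M = 0.
Proof.
move=> H; apply/matrixP=> i j; have /matrixP/(_ i 0) := H (delta_mx j 0).
by rewrite -colE !mxE.
Qed.

Lemma sumsq_ge0 (R : rcfType) p (x : 'cV[R]_p) : 0 <= (x^T *m x) 0 0.
Proof. rewrite mxE; apply: sumr_ge0 => i _; rewrite mxE -expr2; exact: sqr_ge0. Qed.

Lemma sumsq_eq0 (R : rcfType) p (x : 'cV[R]_p) : (x^T *m x) 0 0 = 0 -> x = 0.
Proof.
rewrite mxE => H; apply/matrixP=> i j; rewrite (ord1 j) mxE.
have h0 : forall k, predT k -> 0 <= x^T 0 k * x k 0.
  by move=> k _; rewrite mxE -expr2 sqr_ge0.
have := @psumr_eq0P _ _ predT (fun k => x^T 0 k * x k 0) h0 H i isT.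
rewrite mxE => /eqP; rewrite mulf_eq0 orbb => /eqP //.
Qed.

Lemma tr_eq0 (R : rcfType) p q (A : 'M[R]_(p, q)) : A^T = 0 -> A = 0.
Proof. by move=> H; rewrite -(trmxK A) H trmx0. Qed.

Lemma mul_cV_tr (R : rcfType) p q (A : 'M[R]_(p, q)) (x : 'cV_q) :
  A *m x = 0 <-> x^T *m A^T = 0.
Proof.
split=> H; first by rewrite -trmx_mul H trmx0.
by apply: tr_eq0; rewrite trmx_mul.
Qed.

Lemma ker_mulTmx (R : rcfType) p q (A : 'M[R]_(p, q)) (x : 'cV_q) :
  A^T *m A *m x = 0 -> A *m x = 0.
Proof.
move=> H; apply: sumsq_eq0; rewrite trmx_mul -mulmxA (mulmxA A^T) H.
by rewrite mulmx0 mxE.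
Qed.

Lemma kerS (R : rcfType) p q m (A1 : 'M[R]_(p, m)) (A2 : 'M[R]_(q, m)) :
  (forall x : 'cV_m, A1 *m x = 0 -> A2 *m x = 0) -> (kermx A1^T <= kermx A2^T)%MS.
Proof.
move=> H; apply/row_subP => i; apply/sub_kermxP.
have /sub_kermxP : (row i (kermx A1^T) <= kermx A1^T)%MS by apply: row_sub.
move=> h; have h1 : A1 *m (row i (kermx A1^T))^T = 0.
  by apply/mul_cV_tr; rewrite !trmxK.
by have /mul_cV_tr := H _ h1; rewrite !trmxK.
Qed.

Lemma rank_kerS (R : rcfType) p q m (A1 : 'M[R]_(p, m)) (A2 : 'M[R]_(q, m)) :
  (forall x : 'cV_m, A1 *m x = 0 -> A2 *m x = 0) -> (\rank A2 <= \rank A1)%N.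
Proof.
move=> /kerS /mxrankS; rewrite !mxrank_ker !mxrank_tr.
have := rank_leq_col A1; have := rank_leq_col A2; lia.
Qed.

Lemma rank_same_kernel (R : rcfType) p q m (A1 : 'M[R]_(p, m)) (A2 : 'M[R]_(q, m)) :
  same_kernel A1 A2 -> \rank A1 = \rank A2.
Proof.
move=> H; apply/eqP; rewrite eqn_leq !rank_kerS // => x; by case: (H x).
Qed.

Lemma ker_eq_rank (R : rcfType) p q m (A1 : 'M[R]_(p, m)) (A2 : 'M[R]_(q, m)) :
  (forall x : 'cV_m, A1 *m x = 0 -> A2 *m x = 0) -> \rank A1 = \rank A2 ->
  forall x : 'cV_m, A2 *m x = 0 -> A1 *m x = 0.
Proof.
move=> H hr; have sK := kerS H.
have : (kermx A1^T == kermx A2^T)%MS.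
  by rewrite -(mxrank_leqif_eq sK) !mxrank_ker !mxrank_tr hr.
move=> /andP[_ sK2] x /mul_cV_tr /sub_kermxP h.
by apply/mul_cV_tr/sub_kermxP; apply: submx_trans sK2.
Qed.

Lemma unit_of_inj (R : rcfType) p (A : 'M[R]_p) :
  (forall x : 'cV_p, A *m x = 0 -> x = 0) -> A \in unitmx.
Proof.
move=> H; rewrite -row_free_unit /row_free.
rewrite (@rank_same_kernel _ _ _ _ A (1%:M : 'M[R]_p)) ?mxrank1 //.
by move=> x; rewrite mul1mx; split=> [/H|->]; rewrite ?mulmx0.
Qed.

Lemma inj_of_rank (R : rcfType) m k (N : 'M[R]_(m, k)) :
  \rank N = k -> forall y : 'cV_k, N *m y = 0 -> y = 0.
Proof.
move=> hN y /mul_cV_tr /eqP; rewrite mulmx_free_eq0.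
  by move/eqP/tr_eq0.
by rewrite /row_free mxrank_tr hN.
Qed.

Lemma unit_inj (R : rcfType) p q (A : 'M[R]_p) (x : 'M_(p, q)) : A \in unitmx -> A *m x = 0 -> x = 0.
Proof. by move=> hA h; rewrite -(mulKmx hA x) h mulmx0. Qed.


Lemma spd_unit (R : rcfType) p (A : 'M[R]_p) : spd_mx A -> A \in unitmx.
Proof.
move=> [_ hA]; apply: unit_of_inj => x Ax; case: (eqVneq x 0) => // /hA.
by rewrite -mulmxA Ax mulmx0 mxE ltxx.
Qed.

Lemma spd_congr (R : rcfType) p (A E : 'M[R]_p) :
  spd_mx A -> E \in unitmx -> spd_mx (E^T *m A *m E).
Proof.
move=> [sA hA] uE; split.
  by rewrite /symmetric_mx !trmx_mul trmxK sA mulmxA.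
move=> x x0; rewrite -!mulmxA !mulmxA -trmx_mul -mulmxA; apply: hA.
by apply: contra x0 => /eqP h; apply/eqP; apply: unit_inj uE h.
Qed.

Lemma spd_block (R : rcfType) p1 p2 (a : 'M[R]_p1) b c (d : 'M[R]_p2) :
  spd_mx (block_mx a b c d) -> [/\ spd_mx a, spd_mx d & c = b^T].
Proof.
move=> [sA hA]; move: sA; rewrite /symmetric_mx tr_block_mx.
move=> /eq_block_mx [sa hb hc sd]; split => //.
- split=> // x x0; have := hA (col_mx x 0).
  rewrite col_mx_eq0 negb_and x0 => /(_ isT).
  rewrite tr_col_mx trmx0 mul_row_block.
  rewrite (mul0mx _ c) (mul0mx _ d) !addr0 mul_row_col mulmx0 addr0.
  done.
- split=> // x x0; have := hA (col_mx 0 x).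
  rewrite col_mx_eq0 negb_and x0 orbT => /(_ isT).
  rewrite tr_col_mx trmx0 mul_row_block (mul0mx _ a) (mul0mx _ b) !add0r.
  by rewrite mul_row_col mulmx0 add0r.
Qed.

Lemma chol (R : rcfType) p (A : 'M[R]_p) :
  spd_mx A -> exists Y : 'M[R]_p, Y \in unitmx /\ A = Y *m Y^T.
Proof.
elim: p A => [|p IH] A hA.
  by exists 1%:M; split; [exact: unitmx1 | apply/matrixP => -[]].
pose A' : 'M_(1 + p) := A.
set a := ulsubmx A'; set b := ursubmx A'; set c := dlsubmx A'; set d := drsubmx A'.
have AE : A = block_mx a b c d by rewrite submxK.
have hB : spd_mx (block_mx a b c d) by rewrite -AE. have [[_ ha] sd hc] := spd_block hB.
have a0 : 0 < a 0 0.
  have h10 : (1%:M : 'cV[R]_1) != 0.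
    by apply/eqP => /matrixP/(_ 0 0); rewrite !mxE /= => /eqP; rewrite oner_eq0.
  have := ha 1%:M h10; rewrite trmx1 mul1mx mulmx1 => h.
  exact: h.
set ai := (a 0 0)^-1.
have aE : a = (a 0 0)%:M by exact: mx11_scalar.
set q := ai *: b.
set E : 'M[R]_(1 + p) := block_mx 1%:M (- q) 0 1%:M.
have uE : E \in unitmx by rewrite unitmxE det_ublock !det1 mulr1 unitr1.
have hEAE : E^T *m block_mx a b c d *m E = block_mx a 0 0 (d - c *m q).
  rewrite /E tr_block_mx !trmx1 trmx0 !mulmx_block.
  rewrite !mul1mx !mulmx1. rewrite (mul0mx _ c) (mul0mx _ d) !addr0 !mulmx0 !addr0.
  have h1 : a *m q = b.
    by rewrite /q -scalemxAr aE mul_scalar_mx scalerA mulVf ?scale1r // gt_eqF.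
  have h2 : q^T *m a = c.
    by rewrite /q aE linearZ /= -scalemxAl mul_mx_scalar scalerA mulVf ?scale1r ?hc // gt_eqF.
  have h3 : q^T *m b = c *m q.
    by rewrite /q linearZ /= -scalemxAl -scalemxAr hc.
  by rewrite mulmxN h1 addNr linearN /= mulNmx h2 addNr (mul0mx _ (- q)) add0r mulNmx h3 addrC.
have hS : spd_mx (d - c *m q).
  by have := spd_congr hB uE; rewrite hEAE => /spd_block [].
have [Y1 [uY1 eY1]] := IH _ hS.
set s := Num.sqrt (a 0 0).
have s0 : 0 < s by rewrite sqrtr_gt0.
set F : 'M[R]_(1 + p) := block_mx s%:M 0 0 Y1.
have uF : F \in unitmx.
  rewrite unitmxE det_ublock det_scalar1 unitrM -unitmxE uY1 andbT.
  by rewrite unitfE gt_eqF.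
have hFF : F *m F^T = block_mx a 0 0 (d - c *m q).
  rewrite /F tr_block_mx tr_scalar_mx !trmx0 mulmx_block.
  rewrite (mul0mx _ 0) (mul0mx _ Y1^T) !mulmx0 !addr0 add0r -eY1 -scalar_mxM.
  rewrite (mul0mx _ s%:M) -expr2 sqr_sqrtr ?ltW //.
  by rewrite -aE.
exists (invmx E^T *m F); split.
  by rewrite unitmx_mul unitmx_inv unitmx_tr uE uF.
rewrite AE trmx_mul trmx_inv trmxK mulmxA -(mulmxA _ F) hFF -hEAE.
by rewrite !mulmxA mulVmx ?unitmx_tr // mul1mx mulmxK.
Qed.


Lemma quad_aux (R : rcfType) (s c : R) :
  0 <= c -> (forall t, 0 <= 2 * t * s + t ^+ 2 * c) -> s = 0.
Proof.
move=> c0 H; have c1 : 0 < c + 1 by lra.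
pose u := s / (c + 1).
have su : s = u * (c + 1) by rewrite /u divfK // gt_eqF.
have := H (- u); rewrite su => h.
have : u ^+ 2 * (c + 2) <= 0 by nra.
move=> h2; have : u ^+ 2 <= 0 by nra.
move=> h3; have u0 : u = 0 by nra.
by rewrite u0 mul0r.
Qed.

Lemma psd_ker (R : rcfType) p (A : 'M[R]_p) (x : 'cV[R]_p) :
  spsd_mx A -> (x^T *m A *m x) 0 0 = 0 -> A *m x = 0.
Proof.
move=> [sA hA] hx; set y := A *m x.
have hx' : x^T *m A *m x = 0.
  by rewrite [LHS]mx11_scalar hx; apply/matrixP => i j; rewrite !ord1 !mxE.
have e1 : x^T *m A *m y = y^T *m y.
  by rewrite /y -{1}sA -trmx_mul.
have e2 : y^T *m A *m x = y^T *m y by rewrite -mulmxA.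
have key : forall t, (x + t *: y)^T *m A *m (x + t *: y)
     = (2 * t) *: (y^T *m y) + (t ^+ 2) *: (y^T *m A *m y).
  move=> t; rewrite [(x + t *: y)^T]linearD /= [(t *: y)^T]linearZ /=.
  rewrite !mulmxDl !mulmxDr -!scalemxAl.
  rewrite -!scalemxAr hx' e1 e2 add0r scalerA -expr2 addrA -scalerDl.
  by congr (_ *: _ + _); ring.
set M := y^T *m y; set N := y^T *m A *m y.
have := @quad_aux _ (M 0 0) (N 0 0) (hA y) => h.
apply: sumsq_eq0; apply: h => t; have := hA (x + t *: y); rewrite key.
by rewrite !mxE.
Qed.

Lemma spsd_MTM (R : rcfType) p q (M : 'M[R]_(p, q)) : spsd_mx (M^T *m M).
Proof.
split; first by rewrite /symmetric_mx trmx_mul trmxK.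
by move=> x; rewrite mulmxA -trmx_mul -mulmxA; apply: sumsq_ge0.
Qed.

Lemma same_kernel_MTM (R : rcfType) p q (M : 'M[R]_(p, q)) :
  same_kernel (M^T *m M) M.
Proof.
move=> x; split; first exact: ker_mulTmx.
by rewrite -mulmxA => ->; rewrite mulmx0.
Qed.


Lemma kerbasis (R : rcfType) p m k (A : 'M[R]_(p, m)) : k = (m - \rank A)%N ->
  exists N : 'M[R]_(m, k), [/\ A *m N = 0,
    (forall x : 'cV_m, A *m x = 0 -> exists y : 'cV_k, x = N *m y) & \rank N = k].
Proof.
move=> hk; have e : \rank (kermx A^T) = k by rewrite mxrank_ker mxrank_tr hk.
clear hk; case: k / e.
exists (row_base (kermx A^T))^T; split.
- by apply: tr_eq0; rewrite trmx_mul trmxK; apply/sub_kermxP; rewrite eq_row_base.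
- move=> x /mul_cV_tr /sub_kermxP hx.
  have : (x^T <= row_base (kermx A^T))%MS by rewrite eq_row_base.
  move=> /submxP [D hD].
  by exists D^T; rewrite -trmx_mul -hD trmxK.
- by rewrite mxrank_tr; apply/eqP; exact: row_base_free.
Qed.

Lemma rowbasis (R : rcfType) p m r (A : 'M[R]_(p, m)) : \rank A = r ->
  exists P0 : 'M[R]_(m, r), (exists D, P0^T = D *m A) /\ \rank P0 = r.
Proof.
move=> e; case: r / e.
exists (row_base A)^T; split.
  have : (row_base A <= A)%MS by rewrite eq_row_base.
  by move=> /submxP [D hD]; exists D; rewrite trmxK.
by rewrite mxrank_tr; apply/eqP; exact: row_base_free.
Qed.

Lemma spd_MTM (R : rcfType) p q (M : 'M[R]_(p, q)) :
  (forall y : 'cV_q, M *m y = 0 -> y = 0) -> spd_mx (M^T *m M).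
Proof.
move=> hM; split; first by case: (spsd_MTM M).
move=> x x0; rewrite mulmxA -trmx_mul -mulmxA lt_def sumsq_ge0 andbT.
apply/eqP => /sumsq_eq0 /hM /eqP; exact/negP.
Qed.

Lemma orthonorm (R : rcfType) m r (P0 : 'M[R]_(m, r)) :
  (forall y : 'cV_r, P0 *m y = 0 -> y = 0) ->
  exists L : 'M[R]_r, L \in unitmx /\ (P0 *m L)^T *m (P0 *m L) = 1%:M.
Proof.
move=> hP; have [Y [uY eY]] := chol (spd_MTM hP).
exists (invmx Y^T); split; first by rewrite unitmx_inv unitmx_tr.
rewrite trmx_mul trmx_inv trmxK mulmxA -(mulmxA _ P0^T) eY.
by rewrite !mulmxA mulVmx // mul1mx mulmxV // unitmx_tr.
Qed.


Lemma rmx0_mul (R : rcfType) n r k p (A : 'M[R]_(n, r)) (u : 'M_(r + k, p)) :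
  row_mx A (0 : 'M_(n, k)) *m u = A *m usubmx u.
Proof. by rewrite -{1}[u]vsubmxK mul_row_col (mul0mx _ (dsubmx u)) addr0. Qed.

Lemma rank_of_inj (R : rcfType) p q (A : 'M[R]_(p, q)) :
  (forall x : 'cV_q, A *m x = 0 -> x = 0) -> \rank A = q.
Proof.
move=> H; rewrite (@rank_same_kernel _ _ _ _ A (1%:M : 'M[R]_q)) ?mxrank1 //.
by move=> x; rewrite mul1mx; split=> [/H|->]; rewrite ?mulmx0.
Qed.

Lemma Qfacts (R : rcfType) n r k (B : 'M[R]_(n, r + k)) (C : 'M[R]_(r + k, n))
  (V : 'M[R]_(r + k)) (B1 : 'M[R]_(n, r)) (C1 : 'M[R]_(r, n)) :
  V \in unitmx -> B *m V = row_mx B1 0 -> C^T *m V = row_mx C1^T 0 ->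
  [/\ B = row_mx B1 0 *m invmx V, C = (invmx V)^T *m col_mx C1 0,
      B *m (V *m col_mx 1%:M 0) = B1 & C^T *m (V *m col_mx 1%:M 0) = C1^T].
Proof.
move=> uV hB hC; split.
- by rewrite -hB mulmxK.
- apply: trmx_inj; rewrite trmx_mul trmxK tr_col_mx trmx0 -hC mulmxK //.
- by rewrite mulmxA hB rmx0_mul col_mxKu mulmx1.
- by rewrite mulmxA hC rmx0_mul col_mxKu mulmx1.
Qed.

Lemma Q_to_P (R : rcfType) n r k (B : 'M[R]_(n, r + k)) (C : 'M[R]_(r + k, n))
  (V : 'M[R]_(r + k)) (B1 : 'M[R]_(n, r)) (C1 : 'M[R]_(r, n)) (Y : 'M[R]_r) :
  V \in unitmx -> B *m V = row_mx B1 0 -> C^T *m V = row_mx C1^T 0 ->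
  Y \in unitmx -> C1 *m B1 = Y *m Y^T ->
  [/\ same_kernel C^T B, \rank (C *m B) = r & spsd_mx (C *m B)].
Proof.
move=> uV hB hC uY hYY; have [eB eC _ _] := Qfacts uV hB hC.
set W := invmx V.
have uYY : C1 *m B1 \in unitmx by rewrite hYY unitmx_mul unitmx_tr uY.
have eCt : C^T = row_mx C1^T 0 *m W by rewrite -hC mulmxK.
pose M := row_mx Y^T (0 : 'M_(r, k)) *m W.
have eCB : C *m B = M^T *m M.
  rewrite eC eB /M trmx_mul tr_row_mx trmx0 trmxK -/W !mulmxA; congr (_ *m _).
  rewrite -!mulmxA; congr (_ *m _).
  rewrite !mul_col_row (mul0mx _ B1) (mul0mx _ Y^T) !mulmx0 hYY.
  done.
split.
- move=> x; rewrite eCt eB -!mulmxA !rmx0_mul; set u := usubmx _.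
  split=> h.
    have : (C1 *m B1)^T *m u = 0 by rewrite trmx_mul -mulmxA h mulmx0.
    by move=> /(unit_inj _); rewrite unitmx_tr => /(_ uYY) ->; rewrite mulmx0.
  have : (C1 *m B1) *m u = 0 by rewrite -mulmxA h mulmx0.
  by move=> /(unit_inj uYY) ->; rewrite mulmx0.
- rewrite eCB (rank_same_kernel (same_kernel_MTM M)).
  apply/eqP; rewrite eqn_leq rank_leq_row /=.
  have e : \rank (M *m (V *m col_mx 1%:M 0)) = r.
    rewrite /M -mulmxA (mulmxA W) mulVmx // mul1mx rmx0_mul col_mxKu mulmx1.
    by rewrite mxrank_tr; move: uY; rewrite -row_free_unit => /eqP.
  by apply: (leq_trans _ (mxrankM_maxl M (V *m col_mx 1%:M 0))); rewrite e.
- by rewrite eCB; apply: spsd_MTM.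
Qed.


Lemma eqT_iff (R : rcfType) n m (B : 'M[R]_(n, m)) (C : 'M[R]_(m, n)) (T : 'M[R]_n) :
  T \in unitmx -> ((T *m B)^T = C *m invmx T <-> C = B^T *m T^T *m T).
Proof.
move=> uT; split=> h.
  by rewrite -trmx_mul h mulmxKV.
by rewrite h trmx_mul mulmxK.
Qed.

Lemma E_to_P (R : rcfType) n m (B : 'M[R]_(n, m)) (C : 'M[R]_(m, n)) (T : 'M[R]_n) :
  T \in unitmx -> (T *m B)^T = C *m invmx T ->
  [/\ same_kernel C^T B, \rank (C *m B) = \rank B & spsd_mx (C *m B)].
Proof.
move=> uT /(eqT_iff _ _ uT) eC.
have eCB : C *m B = (T *m B)^T *m (T *m B) by rewrite eC trmx_mul !mulmxA.
have uTT : T^T *m T \in unitmx by rewrite unitmx_mul unitmx_tr uT.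
split.
- move=> x; rewrite eC !trmx_mul !trmxK -!mulmxA (mulmxA T^T); split.
    by move=> /(unit_inj uTT).
  by move=> ->; rewrite mulmx0.
- rewrite eCB (rank_same_kernel (same_kernel_MTM _)); apply: rank_same_kernel.
  move=> x; rewrite -mulmxA; split; first by move=> /(unit_inj uT).
  by move=> ->; rewrite mulmx0.
- by rewrite eCB; apply: spsd_MTM.
Qed.


Lemma P_to_Q (R : rcfType) n r k (B : 'M[R]_(n, r + k)) (C : 'M[R]_(r + k, n)) :
  \rank B = r -> same_kernel C^T B -> \rank (C *m B) = r -> spsd_mx (C *m B) ->
  exists (V : 'M[R]_(r + k)) (B1 : 'M[R]_(n, r)) (C1 : 'M[R]_(r, n)) (Y : 'M[R]_r),
     (orthogonal_mx V /\ B *m V = row_mx B1 0 /\ C^T *m V = row_mx C1^T 0 /\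
         \rank B1 = r /\ \rank C1^T = r /\
         Y \in unitmx /\ C1 *m B1 = Y *m Y^T /\ spd_mx (C1 *m B1)).
Proof.
move=> hr hK hrCB hCB.
have [P0 [[D0 hD0] rP0]] := rowbasis hr.
have ek : k = (r + k - \rank B)%N by rewrite hr; lia.
have [K0 [BK0 spanK0 rK0]] := kerbasis ek.
have [L1 [uL1 oP]] := orthonorm (inj_of_rank rP0).
have [L2 [uL2 oK]] := orthonorm (inj_of_rank rK0).
have [P [eP {}oP]] : exists P, P = P0 *m L1 /\ P^T *m P = 1%:M by exists (P0 *m L1).
have [K [eK {}oK]] : exists K, K = K0 *m L2 /\ K^T *m K = 1%:M by exists (K0 *m L2).
have PK0 : P^T *m K0 = 0.
  by rewrite eP trmx_mul hD0 -!mulmxA BK0 !mulmx0.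
have PK : P^T *m K = 0 by rewrite eK mulmxA PK0 mul0mx.
have BK : B *m K = 0 by rewrite eK mulmxA BK0 mul0mx.
have CK0 : C^T *m K0 = 0.
  apply: mx_eq0_cV => y; rewrite -mulmxA; apply/(hK _).2.
  by rewrite mulmxA BK0 mul0mx.
have CK : C^T *m K = 0 by rewrite eK mulmxA CK0 mul0mx.
pose V := row_mx P K.
have oV : V^T *m V = 1%:M.
  rewrite /V tr_row_mx mul_col_row oP oK PK.
  have -> : K^T *m P = 0 by rewrite -(trmxK P) -trmx_mul PK trmx0.
  by rewrite -scalar_mx_block.
have hCBx : forall x : 'cV_(r + k), C *m B *m x = 0 -> B *m x = 0.
  apply: (ker_eq_rank _ _).
    by move=> x; rewrite -mulmxA => ->; rewrite mulmx0.
  by rewrite hr hrCB.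
set B1 := B *m P; set C1 := (C^T *m P)^T.
have eC1B1 : C1 *m B1 = P^T *m (C *m B) *m P.
  by rewrite /C1 /B1 trmx_mul trmxK !mulmxA.
have spdCB : spd_mx (C1 *m B1).
  have [sCB pCB] := hCB.
  split.
    by rewrite eC1B1 /symmetric_mx trmx_mul [(P^T *m _)^T]trmx_mul trmxK sCB mulmxA.
  move=> x x0; rewrite eC1B1 lt_def.
  have -> : x^T *m (P^T *m (C *m B) *m P) *m x = (P *m x)^T *m (C *m B) *m (P *m x).
    by rewrite trmx_mul !mulmxA.
  rewrite pCB andbT; apply/eqP => /(psd_ker hCB).
  move=> /hCBx /spanK0 [w hw].
  have : x = P^T *m (P *m x) by rewrite mulmxA oP mul1mx.
  rewrite hw mulmxA PK0 mul0mx => x00.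
  by move: x0; rewrite x00 eqxx.
have [Y [uY eY]] := chol spdCB.
have uCB : C1 *m B1 \in unitmx by apply: spd_unit.
exists V, B1, C1, Y; split; first exact: mulmx1C.
split; first by rewrite /V mul_mx_row BK.
split; first by rewrite /V mul_mx_row CK /C1 trmxK.
split.
  apply: rank_of_inj => x hx; apply: (unit_inj uCB).
  by rewrite -mulmxA hx mulmx0.
split.
  have uCBt : (C1 *m B1)^T \in unitmx by rewrite unitmx_tr.
  apply: rank_of_inj => x hx; apply: (unit_inj uCBt).
  by rewrite trmx_mul -mulmxA hx mulmx0.
by [].
Qed.


Lemma T0_unit (R : rcfType) l r k (NB : 'M[R]_(l + r, l))
  (B : 'M[R]_(l + r, r + k)) (C : 'M[R]_(r + k, l + r))
  (V : 'M[R]_(r + k)) (B1 : 'M[R]_(l + r, r)) (C1 : 'M[R]_(r, l + r)) (Y : 'M[R]_r) :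
  B^T *m NB = 0 -> \rank NB = l ->
  V \in unitmx -> B *m V = row_mx B1 0 -> C^T *m V = row_mx C1^T 0 ->
  Y \in unitmx -> C1 *m B1 = Y *m Y^T ->
  col_mx NB^T (invmx Y *m C1) \in unitmx.
Proof.
move=> hN0 rN uV hB hC uY hYY; have [_ _ eB1 _] := Qfacts uV hB hC.
have NB1 : NB^T *m B1 = 0.
  have h : NB^T *m B = 0 by rewrite -[NB^T *m B]trmxK trmx_mul trmxK hN0 trmx0.
  by rewrite -eB1 mulmxA h mul0mx.
have u1 : NB^T *m NB \in unitmx by apply/spd_unit/spd_MTM/inj_of_rank.
have e2 : invmx Y *m C1 *m B1 = Y^T by rewrite -mulmxA hYY mulKmx.
have uP : col_mx NB^T (invmx Y *m C1) *m row_mx NB B1 \in unitmx.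
  rewrite mul_col_row NB1 e2 unitmxE.
  rewrite (_ : \det _ = \det (NB^T *m NB) * \det Y^T); last exact: det_lblock.
  by rewrite unitrM -!unitmxE u1 unitmx_tr uY.
by move: uP; rewrite unitmx_mul => /andP [].
Qed.

Lemma b_back (R : rcfType) l r k (NB : 'M[R]_(l + r, l))
  (B : 'M[R]_(l + r, r + k)) (C : 'M[R]_(r + k, l + r))
  (V : 'M[R]_(r + k)) (B1 : 'M[R]_(l + r, r)) (C1 : 'M[R]_(r, l + r)) (Y : 'M[R]_r)
  (U : 'M[R]_(l + r)) (Z : 'M[R]_l) :
  B^T *m NB = 0 -> \rank NB = l ->
  V \in unitmx -> B *m V = row_mx B1 0 -> C^T *m V = row_mx C1^T 0 ->
  Y \in unitmx -> C1 *m B1 = Y *m Y^T ->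
  orthogonal_mx U -> Z \in unitmx ->
  let T := U *m block_mx Z 0 0 (1%:M : 'M[R]_r) *m col_mx NB^T (invmx Y *m C1) in
  T \in unitmx /\ (T *m B)^T = C *m invmx T.
Proof.
move=> hN0 rN uV hB hC uY hYY oU uZ T.
have uT0 := T0_unit hN0 rN uV hB hC uY hYY.
have [uU _] := mulmx1_unit oU.
have UtU : U^T *m U = 1%:M by apply: mulmx1C.
have uTZ : block_mx Z 0 0 (1%:M : 'M[R]_r) \in unitmx.
  rewrite unitmxE (_ : \det _ = \det Z * \det (1%:M : 'M[R]_r)); last exact: det_ublock.
  by rewrite det1 mulr1 -unitmxE.
have uT : T \in unitmx by rewrite !unitmx_mul uU uTZ uT0.
split => //; apply/(eqT_iff _ _ uT).
have [eB eC _ _] := Qfacts uV hB hC.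
set W := invmx V in eB eC.
have eS : block_mx Z 0 0 (1%:M : 'M[R]_r) *m col_mx NB^T (invmx Y *m C1)
        = col_mx (Z *m NB^T) (invmx Y *m C1).
  rewrite mul_block_col (mul0mx _ (invmx Y *m C1)) (mul0mx _ NB^T) addr0 add0r mul1mx.
  done.
have eT : T = U *m col_mx (Z *m NB^T) (invmx Y *m C1) by rewrite /T -mulmxA eS.
rewrite eT trmx_mul -!mulmxA (mulmxA U^T) UtU mul1mx.
rewrite tr_col_mx mul_row_col mulmxDr.
have -> : B^T *m ((Z *m NB^T)^T *m (Z *m NB^T)) = 0.
  by rewrite trmx_mul trmxK !mulmxA hN0 !mul0mx.
rewrite add0r.
have eBC : B^T *m C1^T = W^T *m col_mx (Y *m Y^T) 0.
  rewrite eB trmx_mul tr_row_mx trmx0 -mulmxA mul_col_mx -trmx_mul hYY.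
  by rewrite trmx_mul trmxK (mul0mx _ C1^T).
rewrite trmx_mul !mulmxA eBC -!mulmxA mul_col_mx.
rewrite (mul0mx _ ((invmx Y)^T *m _)).
have -> : Y *m Y^T *m ((invmx Y)^T *m (invmx Y *m C1)) = C1.
  by rewrite trmx_inv !mulmxA mulmxK ?unitmx_tr // mulmxV // mul1mx.
by rewrite eC.
Qed.

Lemma b_fwd (R : rcfType) l r k (NB : 'M[R]_(l + r, l))
  (B : 'M[R]_(l + r, r + k)) (C : 'M[R]_(r + k, l + r))
  (V : 'M[R]_(r + k)) (B1 : 'M[R]_(l + r, r)) (C1 : 'M[R]_(r, l + r)) (Y : 'M[R]_r)
  (T : 'M[R]_(l + r)) :
  B^T *m NB = 0 -> \rank NB = l ->
  V \in unitmx -> B *m V = row_mx B1 0 -> C^T *m V = row_mx C1^T 0 ->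
  Y \in unitmx -> C1 *m B1 = Y *m Y^T ->
  T \in unitmx -> (T *m B)^T = C *m invmx T ->
  exists (U : 'M[R]_(l + r)) (Z : 'M[R]_l),
    orthogonal_mx U /\ Z \in unitmx /\
    T = U *m block_mx Z 0 0 (1%:M : 'M[R]_r) *m col_mx NB^T (invmx Y *m C1).
Proof.
move=> hN0 rN uV hB hC uY hYY uT /(eqT_iff _ _ uT) eC.
have uT0 := T0_unit hN0 rN uV hB hC uY hYY.
have [eB _ eB1 eC1] := Qfacts uV hB hC.
set V1 := V *m col_mx 1%:M 0 in eB1 eC1.
set Ti := invmx T.
set H := Ti *m Ti^T.
have uTi : Ti \in unitmx by rewrite unitmx_inv.
have HCt : H *m C^T = B.
  rewrite eC !trmx_mul !trmxK /H /Ti trmx_inv !mulmxA -(mulmxA _ (invmx T^T)).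
  by rewrite mulVmx ?unitmx_tr // mulmx1 mulVmx // mul1mx.
have HC1 : H *m C1^T = B1 by rewrite -eC1 mulmxA HCt.
have Hsym : H^T = H by rewrite /H trmx_mul trmxK.
have C1H : C1 *m H = B1^T by rewrite -HC1 trmx_mul Hsym trmxK.
have NB1 : NB^T *m B1 = 0.
  have h : NB^T *m B = 0 by rewrite -[NB^T *m B]trmxK trmx_mul trmxK hN0 trmx0.
  by rewrite -eB1 mulmxA h mul0mx.
have B1N : B1^T *m NB = 0 by rewrite -[B1^T *m NB]trmxK trmx_mul trmxK NB1 trmx0.
set T0 := col_mx NB^T (invmx Y *m C1) in uT0 *.
set W' := NB^T *m H *m NB.
have eTHT : T0 *m H *m T0^T = block_mx W' 0 0 (1%:M : 'M[R]_r).
  rewrite /T0 tr_col_mx mul_col_mx mul_col_row trmx_mul trmxK.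
  have -> : NB^T *m H *m (C1^T *m (invmx Y)^T) = 0.
    by rewrite mulmxA -(mulmxA NB^T) HC1 NB1 mul0mx.
  have -> : invmx Y *m C1 *m H *m NB = 0.
    by rewrite -(mulmxA (invmx Y)) C1H -mulmxA B1N mulmx0.
  have -> : invmx Y *m C1 *m H *m (C1^T *m (invmx Y)^T) = 1%:M.
    rewrite -(mulmxA (invmx Y)) C1H -!mulmxA (mulmxA B1^T) -trmx_mul hYY.
    rewrite trmx_mul trmxK trmx_inv !mulmxA mulVmx // mul1mx mulmxV //.
    by rewrite unitmx_tr.
  done.
have spdW : spd_mx W'.
  have -> : W' = (Ti^T *m NB)^T *m (Ti^T *m NB).
    by rewrite /W' /H trmx_mul trmxK !mulmxA.
  apply: spd_MTM => y; rewrite -mulmxA => /(unit_inj _).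
  rewrite unitmx_tr => /(_ uTi); exact: inj_of_rank.
have [Y' [uY' eY']] := chol spdW.
set Z := invmx Y'.
set TZ := block_mx Z 0 0 (1%:M : 'M[R]_r).
set Mi := TZ *m T0 *m Ti.
have MiMi : Mi *m Mi^T = 1%:M.
  rewrite /Mi !trmx_mul !mulmxA -(mulmxA _ Ti) -/H -(mulmxA _ T0^T).
  have -> : TZ *m T0 *m H *m (T0^T *m TZ^T) = TZ *m (T0 *m H *m T0^T) *m TZ^T.
    by rewrite !mulmxA.
  rewrite eTHT /TZ tr_block_mx tr_scalar_mx !trmx0 !mulmx_block.
  rewrite (scalar_mx_block l r 1); congr block_mx;
  rewrite ?mulmx0 ?mul0mx ?addr0 ?add0r ?mul1mx ?mulmx1 ?mulmx0 ?mul0mx ?addr0 ?add0r //.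
  rewrite eY' /Z trmx_inv !mulmxA mulVmx // mul1mx mulmxV //.
  by rewrite unitmx_tr.
have MitMi : Mi^T *m Mi = 1%:M by apply: mulmx1C.
exists Mi^T, Z; split; first by rewrite /orthogonal_mx trmxK.
split; first by rewrite unitmx_inv.
have -> : Mi^T *m TZ *m T0 = Mi^T *m (Mi *m T).
  by rewrite /Mi -!mulmxA mulVmx // mulmx1.
by rewrite mulmxA MitMi mul1mx.
Qed.

End Helpers.
Import Helpers.

Theorem lemma3p2 (R : rcfType) (n m r : nat)
  (B : 'M[R]_(n, m)) (C : 'M[R]_(m, n))
  (hrn : (r <= n)%N) (hrm : (r <= m)%N) (hr : \rank B = r) :
  (* (a), first equivalence *)
  ((exists T : 'M[R]_n, T \in unitmx /\ (T *m B)^T = C *m invmx T) <->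
   [/\ same_kernel C^T B, \rank (C *m B) = r & spsd_mx (C *m B)])
  /\
  (* (a), second equivalence, with V invertible *)
  ([/\ same_kernel C^T B, \rank (C *m B) = r & spsd_mx (C *m B)] <->
   exists (V : 'M[R]_m) (B1 : 'M[R]_(n, r)) (C1 : 'M[R]_(r, n)) (Y : 'M[R]_r),
     (V \in unitmx /\
         B *m V = castmx (erefl n, subnKC hrm) (row_mx B1 0) /\
         C^T *m V = castmx (erefl n, subnKC hrm) (row_mx C1^T 0) /\
         \rank B1 = r /\ \rank C1^T = r /\
         Y \in unitmx /\ C1 *m B1 = Y *m Y^T /\ spd_mx (C1 *m B1)))
  /\
  (* (a), second equivalence, with V orthogonal *)
  ([/\ same_kernel C^T B, \rank (C *m B) = r & spsd_mx (C *m B)] <->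
   exists (V : 'M[R]_m) (B1 : 'M[R]_(n, r)) (C1 : 'M[R]_(r, n)) (Y : 'M[R]_r),
     (orthogonal_mx V /\
         B *m V = castmx (erefl n, subnKC hrm) (row_mx B1 0) /\
         C^T *m V = castmx (erefl n, subnKC hrm) (row_mx C1^T 0) /\
         \rank B1 = r /\ \rank C1^T = r /\
         Y \in unitmx /\ C1 *m B1 = Y *m Y^T /\ spd_mx (C1 *m B1)))
  /\
  (* (b) parametrization of all solutions *)
  (forall (NB : 'M[R]_(n, n - r)) (V : 'M[R]_m) (B1 : 'M[R]_(n, r))
          (C1 : 'M[R]_(r, n)) (Y : 'M[R]_r),
     cols_basis_of_ker NB B^T ->
     V \in unitmx ->
     B *m V = castmx (erefl n, subnKC hrm) (row_mx B1 0) ->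
     C^T *m V = castmx (erefl n, subnKC hrm) (row_mx C1^T 0) ->
     \rank B1 = r -> \rank C1^T = r ->
     Y \in unitmx -> C1 *m B1 = Y *m Y^T -> spd_mx (C1 *m B1) ->
     forall T : 'M[R]_n,
       (T \in unitmx /\ (T *m B)^T = C *m invmx T) <->
       exists (U : 'M[R]_n) (Z : 'M[R]_(n - r)),
         (orthogonal_mx U /\ Z \in unitmx /\
             T = U *m castmx (subnK hrn, subnK hrn)
                          (block_mx Z 0 0 (1%:M : 'M[R]_r))
                   *m castmx (subnK hrn, erefl n)
                          (col_mx NB^T (invmx Y *m C1)))).
Proof.
generalize (subnKC hrm) (subnK hrn); generalize (m - r)%N (n - r)%N.
move=> k l ek el; subst m n.
have orth_unit : forall p (U : 'M[R]_p), orthogonal_mx U -> U \in unitmx.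
  by move=> p U /mulmx1_unit [].
have QE : forall (V : 'M[R]_(r + k)) (B1 : 'M[R]_(l + r, r)) (C1 : 'M[R]_(r, l + r))
    (Y : 'M[R]_r), V \in unitmx -> B *m V = row_mx B1 0 -> C^T *m V = row_mx C1^T 0 ->
    Y \in unitmx -> C1 *m B1 = Y *m Y^T ->
    exists T : 'M[R]_(l + r), T \in unitmx /\ (T *m B)^T = C *m invmx T.
  move=> V B1 C1 Y uV hB hC uY hYY.
  have el' : l = (l + r - \rank B^T)%N by rewrite mxrank_tr hr; lia.
  have [NB [hN0 _ rN]] := kerbasis el'.
  have o1 : orthogonal_mx (1%:M : 'M[R]_(l + r)) by rewrite /orthogonal_mx trmx1 mulmx1.
  have [uT hT] := b_back hN0 rN uV hB hC uY hYY o1 (unitmx1 _ l).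
  by eexists; split; [exact: uT | exact: hT].
have EP : (exists T : 'M[R]_(l + r), T \in unitmx /\ (T *m B)^T = C *m invmx T) ->
    [/\ same_kernel C^T B, \rank (C *m B) = r & spsd_mx (C *m B)].
  by move=> [T [uT hT]]; have [h1 h2 h3] := E_to_P uT hT; split; rewrite ?h2.
split.
  split; first exact: EP.
  move=> [h1 h2 h3]; have [V [B1 [C1 [Y [oV [hB [hC [_ [_ [uY [hYY _]]]]]]]]]]] := P_to_Q hr h1 h2 h3.
  exact: (QE V B1 C1 Y (orth_unit _ _ oV) hB hC uY hYY).
split.
  split.
    move=> [h1 h2 h3]; have [V [B1 [C1 [Y [oV [hB [hC rest]]]]]]] := P_to_Q hr h1 h2 h3.
    by exists V, B1, C1, Y; split; [exact: orth_unit | split].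
  move=> [V [B1 [C1 [Y [uV [hB [hC [_ [_ [uY [hYY _]]]]]]]]]]].
  exact: (Q_to_P uV hB hC uY hYY).
split.
  split.
    by move=> [h1 h2 h3]; exact: P_to_Q hr h1 h2 h3.
  move=> [V [B1 [C1 [Y [oV [hB [hC [_ [_ [uY [hYY _]]]]]]]]]]].
  exact: (Q_to_P (orth_unit _ _ oV) hB hC uY hYY).
move=> NB V B1 C1 Y [rN hN] uV hB hC _ _ uY hYY _ T.
have hN0 : B^T *m NB = 0.
  apply: mx_eq0_cV => y; rewrite -mulmxA; apply/(hN _).2; by exists y.
split.
  move=> [uT hT]; exact: (b_fwd hN0 rN uV hB hC uY hYY uT hT).
move=> [U [Z [oU [uZ ->]]]].
exact: (b_back hN0 rN uV hB hC uY hYY oU uZ).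
Qed.
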